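(* Let $G$ be a finite group such that every column sum of its character table, $\Gamma_C(G)=\sum_{\chi\in\mathrm{Irr}(G)}\chi(C)$ for $C\in\mathrm{Conj}(G)$, is a nonnegative integer. Then (1) $s(G)\geq \Gamma_e(G)$; and (2) if in addition $G$ is totally orthogonal, then $s(G)\ge\Gamma_e(G)$, with $s(G)=\Gamma_e(G)$ if and only if $G$ is abelian.
   Context: For a finite group $G$, $\mathrm{Irr}(G)$ denotes the set of irreducible complex characters and $\mathrm{Conj}(G)$ the set of conjugacy classes; $s(G)$ is the sum of all entries of the character table, and $\Gamma_e(G)=\sum_{\chi\in\mathrm{Irr}(G)}\chi(e)$ is the sum of the irreducible character degrees. A finite group is totally orthogonal if every irreducible complex representation of it is realizable over $\mathbb{R}$. *)

(* Defs.v *)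
From mathcomp Require Import all_boot all_order all_algebra all_fingroup all_solvable all_field all_character.
Set Implicit Arguments. Unset Strict Implicit. Unset Printing Implicit Defensive.
Import GRing.Theory Num.Theory.
Local Open Scope ring_scope.

Definition col_sum (gT : finGroupType) (G : {group gT}) (C : {set gT}) : algC :=
  \sum_(i : Iirr G) 'chi[G]_i (repr C).

Definition s_sum (gT : finGroupType) (G : {group gT}) : algC :=
  \sum_(C in classes G) col_sum G C.

Definition Gamma_e (gT : finGroupType) (G : {group gT}) : algC :=
  \sum_(i : Iirr G) 'chi[G]_i 1%g.

Definition totally_orthogonal (gT : finGroupType) (G : {group gT}) : Prop :=
  forall i : Iirr G, exists n (rG : mx_representation algC G n),
    (forall g, g \in G -> forall j k, rG g j k \is Num.real) /\
    cfRepr rG = 'chi[G]_i.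

(* Main.v *)
Require Import Defs.
From mathcomp Require Import all_boot all_order all_algebra all_fingroup all_solvable all_field all_character.
Import GRing.Theory Num.Theory.
Local Open Scope ring_scope.

Lemma s_split (gT : finGroupType) (G : {group gT}) :
  s_sum G = Gamma_e G + \sum_(C in classes G | C != 1%g) col_sum G C.
Proof.
rewrite /s_sum (bigD1 1%g) ?classes1 //=; congr (_ + _).
by rewrite /col_sum /Gamma_e repr_set1.
Qed.

Lemma abelian_col0 (gT : finGroupType) (G : {group gT}) C :
  abelian G -> C \in classes G -> C != 1%g -> col_sum G C = 0.
Proof.
move=> /char_abelianP lin CG C1.
have := second_orthogonality_relation (repr C) (group1 G).
rewrite class1G inE.
have -> : (repr C == 1%g) = false.
  apply/negbTE; apply: contra C1 => /eqP r1.
  case/repr_classesP: CG => _ ->; by rewrite r1 class1G.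
rewrite mulr0n => <-; rewrite /col_sum; apply: eq_bigr => i _.
by rewrite lin_char1 // rmorph1 mulr1.
Qed.

Lemma col0_abelian (gT : finGroupType) (G : {group gT}) :
  (forall C, C \in classes G -> C != 1%g -> col_sum G C = 0) -> abelian G.
Proof.
move=> h0.
set th : 'CF(G) := \sum_i 'chi[G]_i.
have thx : forall x, x \in G -> x != 1%g -> th x = 0.
  move=> x Gx x1.
  have [y Gy ry] := repr_class G x.
  have := h0 (x ^: G)%g (mem_classes Gx).
  rewrite classG_eq1 x1 => /(_ isT).
  rewrite /col_sum ry -sum_cfunE /th => <-.
  by rewrite cfunJ.
have dot : forall j, 1 = #|G|%:R^-1 * th 1%g * 'chi[G]_j 1%g.
  move=> j.
  have e1 : '[th, 'chi[G]_j] = 1.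
    rewrite /th cfdot_suml (bigD1 j) //= cfdot_irr eqxx big1 ?addr0 //.
    by move=> i /negbTE ij; rewrite cfdot_irr ij.
  rewrite -[LHS]e1 cfdotE (bigD1 1%g) ?group1 //= big1 ?addr0.
    by rewrite irr1_degree conjC_nat mulrA.
  by move=> x /andP[Gx x1]; rewrite thx // mul0r.
have all1 : forall j, 'chi[G]_j 1%g = 1.
  move=> j; have := dot j; have := dot 0; rewrite irr0 cfun1E group1 mulr1 => <-.
  by rewrite mul1r.
apply/char_abelianP => j.
by rewrite qualifE /= irr_char /= all1 eqxx.
Qed.

Theorem proposition2p6 (gT : finGroupType) (G : {group gT}) :
  (forall C, C \in classes G -> col_sum G C \in Num.nat) ->
  Gamma_e G <= s_sum G /\
  (totally_orthogonal G ->
     Gamma_e G <= s_sum G /\ (s_sum G = Gamma_e G <-> abelian G)).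
Proof.
move=> hnat.
have ge0 : forall C, C \in classes G -> C != 1%g -> 0 <= col_sum G C.
  by move=> C CG _; apply: natr_ge0; exact: (hnat C CG).
have le : Gamma_e G <= s_sum G.
  rewrite s_split -{1}[Gamma_e G]addr0 lerD2l; apply: sumr_ge0 => C /andP[CG C1]; exact: ge0.
split=> // _; split=> //; split=> [eq | ab].
  apply: col0_abelian => C CG C1.
  have eq0 : \sum_(C in classes G | C != 1%g) col_sum G C = 0.
    by apply: (addrI (Gamma_e G)); rewrite addr0 -s_split eq.
  apply: (psumr_eq0P _ eq0); last by rewrite CG.
  by move=> D /andP[DG D1]; exact: ge0.
rewrite s_split big1 ?addr0 // => C /andP[CG C1].
exact: abelian_col0.
Qed.
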